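(* (a) Let $h\in\omega$ and let $(p_i)_{i<\pi(h)}$ be conditions of $\tilde{\mathbb E}$ that all contain a common node $s$ of height $h$ which lies above (i.e., extends) the stem of each $p_i$. Then there is $q\in\tilde{\mathbb E}$ with $q\le p_i$ for all $i<\pi(h)$. (b) $\tilde{\mathbb E}$ is $(\rho,\pi)$-linked; in particular it is ccc. (c) The generic branch $\eta\in\lim(T^* )$ added by $\tilde{\mathbb E}$ is eventually different from every real of the ground model, i.e., for every $x\in\omega^\omega\cap V$ we have $\eta(n)\ne x(n)$ for all but finitely many $n$. (d) If $p\in\tilde{\mathbb E}$ is such that $\operatorname{loss}(p)$ is defined and $s=\operatorname{stem}(p)$, then for every $h>|s|$, \[ \frac{|p\cap\omega^h|}{|T^*\cap\omega^h\cap[s]|}\ge1-\tfrac12\operatorname{loss}(p). \]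
   Context: The tree $T^*\subseteq\omega^{<\omega}$ and associated functions are defined by simultaneous induction on the height $h\ge0$: $T^*\cap\omega^0=\{\langle\rangle\}$; given $T^*\cap\omega^h$, put $\rho(h)=\max(|T^*\cap\omega^h|,h+2)$, $\pi(h)=\big((h+1)^2\rho(h)^{h+1}\big)^{\rho(h)^h}$, $a(h)=\pi(h)^{h+2}$, $M(h)=a(h)^2$; for every $s\in T^*\cap\omega^h$ let $\Omega_s=\{s^\frown\ell:\ \ell<M(h)\}$ (this defines $T^*\cap\omega^{h+1}$). For integers $0\le n<M(h)$ set $\mu_h(n)=\log_{a(h)}\big(\frac{M(h)}{M(h)-n}\big)$ and $\mu_h(M(h))=\infty$; for $s$ of height $h$ and $A\subseteq\Omega_s$ put $\mu_s(A)=\mu_h(|A|)$. For a subtree $p\subseteq T^*$ and $s\in p$ let $\mu_s(p)=\mu_s(\{t\in p: t\in\Omega_s\})$; the stem of $p$ is its shortest splitting node, and ''$t\in p$ above the stem'' means $t\in p$ extends the stem. $\lim(p)$ is the set of $x\in\omega^\omega$ with $x\restriction n\in p$ for all $n$, and $[s]$ is the set of nodes of $T^*$ comparable with $s$. $\tilde{\mathbb E}$ is the set of subtrees $p\subseteq T^*$ whose stem has some height $h^*$ and such that $\mu_t(p)\ge1+\frac1{h^*}$ for all $t\in p$ above the stem (for $h^*=0$ this forces $p=T^*$), ordered by inclusion ($q\le p$ iff $q\subseteq p$). $\operatorname{loss}(p)$ is defined iff there is an integer $m\ge2$ such that the stem of $p$ has height $h^*>3m$ and $\mu_s(p)\ge1+\frac1m$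 for all $s\in p$ of height $\ge h^*$; then $\operatorname{loss}(p)=\frac1m$ for the maximal such $m$. For functions $f,g:\omega\to\omega$ tending to infinity, a forcing $Q$ is $(f,g)$-linked if there are sets $Q^i_j\subseteq Q$ ($i<\omega$, $j<f(i)$), each $g(i)$-linked (any $g(i)$ of its elements have a common extension), such that every $q\in Q$ belongs to $\bigcup_{j<f(i)}Q^i_j$ for all sufficiently large $i$. *)

(* Defs.v *)
From Stdlib Require Import Reals Arith List Lia.
Import ListNotations.

Definition rho_of (h N : nat) : nat := Nat.max N (h + 2).
Definition pi_of (h N : nat) : nat :=
  Nat.pow ((h + 1) * (h + 1) * Nat.pow (rho_of h N) (h + 1)) (Nat.pow (rho_of h N) h).
Definition a_of (h N : nat) : nat := Nat.pow (pi_of h N) (h + 2).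
Definition M_of (h N : nat) : nat := Nat.pow (a_of h N) 2.

(* levelsize h = |T* ∩ ω^h| : every node of height h has exactly M(h) successors. *)
Fixpoint levelsize (h : nat) : nat :=
  match h with
  | 0 => 1
  | S h' => levelsize h' * M_of h' (levelsize h')
  end.

Definition rho (h : nat) : nat := rho_of h (levelsize h).
Definition pi (h : nat) : nat := pi_of h (levelsize h).
Definition a (h : nat) : nat := a_of h (levelsize h).
Definition M (h : nat) : nat := M_of h (levelsize h).

Definition inT (t : list nat) : Prop :=
  forall i, i < length t -> nth i t 0 < M i.

(* Extended nonnegative reals: None = +∞. *)
Definition xR := option R.

Definition mu (h n : nat) : xR :=
  if n <? M h
  then Some (ln (INR (M h) / INR (M h - n)) / ln (INR (a h)))%R
  else None.

Definition xge (x y : xR) : Prop :=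
  match y with
  | None => x = None
  | Some c => match x with None => True | Some r => (c <= r)%R end
  end.

Definition tree := list nat -> bool.

Definition subtree (p : tree) : Prop :=
  p [] = true /\
  (forall t l, p (t ++ [l]) = true -> p t = true) /\
  (forall t, p t = true -> inT t).

Definition succ_count (p : tree) (s : list nat) : nat :=
  length (filter (fun l => p (s ++ [l])) (seq 0 (M (length s)))).

Definition mu_node (p : tree) (s : list nat) : xR := mu (length s) (succ_count p s).

Definition splitting (p : tree) (s : list nat) : Prop :=
  p s = true /\ 2 <= succ_count p s.

Definition is_stem (p : tree) (s : list nat) : Prop :=
  splitting p s /\ forall t, splitting p t -> length s <= length t.

Definition prefix (s t : list nat) : Prop := firstn (length s) t = s.

(* The bound 1 + 1/h*, with 1/0 = +∞. *)
Definition bound (hs : nat) : xR :=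
  match hs with 0 => None | S _ => Some (1 + 1 / INR hs)%R end.

Definition Etilde (p : tree) : Prop :=
  subtree p /\
  exists s, is_stem p s /\
    forall t, p t = true -> prefix s t -> xge (mu_node p t) (bound (length s)).

Definition leE (q p : tree) : Prop := forall t, q t = true -> p t = true.

Definition compatible (p q : tree) : Prop :=
  exists r, Etilde r /\ leE r p /\ leE r q.

Definition linked (k : nat) (Q : tree -> Prop) : Prop :=
  forall r : nat -> tree, (forall i, i < k -> Q (r i)) ->
    exists q, Etilde q /\ forall i, i < k -> leE q (r i).

Definition fg_linked (f g : nat -> nat) : Prop :=
  exists Q : nat -> nat -> tree -> Prop,
    (forall i j q, Q i j q -> Etilde q) /\
    (forall i j, j < f i -> linked (g i) (Q i j)) /\
    (forall q, Etilde q -> exists N, forall i, N <= i -> exists j, j < f i /\ Q i j q).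

Definition ccc : Prop :=
  forall A : tree -> Prop,
    (forall p, A p -> Etilde p) ->
    (forall p q, A p -> A q -> p <> q -> ~ compatible p q) ->
    exists f : tree -> nat, forall p q, A p -> A q -> f p = f q -> p = q.

(* m witnesses that loss(p) is defined (with stem of height hs). *)
Definition loss_ok (p : tree) (m : nat) : Prop :=
  2 <= m /\
  exists s, is_stem p s /\ 3 * m < length s /\
    forall t, p t = true -> length s <= length t ->
      xge (mu_node p t) (Some (1 + 1 / INR m)%R).

Definition is_loss (p : tree) (l : R) : Prop :=
  exists m, loss_ok p m /\ (forall m', loss_ok p m' -> m' <= m) /\ l = (1 / INR m)%R.

(* Number of nodes of p of height |s| + k extending s, enumerated inside T*. *)
Fixpoint count_ext (p : tree) (s : list nat) (k : nat) : nat :=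
  match k with
  | 0 => if p s then 1 else 0
  | S k' => fold_right Nat.add 0
              (map (fun l => count_ext p (s ++ [l]) k') (seq 0 (M (length s))))
  end.

Definition level_card (p : tree) (h : nat) : nat := count_ext p [] h.
(* |T* ∩ ω^h ∩ [s]| for h >= |s| *)
Definition cone_card (s : list nat) (h : nat) : nat :=
  count_ext (fun _ => true) s (h - length s).

(* Main.v *)
Require Import Defs.
From Stdlib Require Import Reals Arith List Lia Lra Bool Cantor Classical ClassicalEpsilon.
Import Defs.
Import ListNotations.
Open Scope bool_scope.
Open Scope nat_scope.

Arguments M : simpl never.
Arguments a : simpl never.
Arguments pi : simpl never.
Arguments rho : simpl never.

Lemma rho_ge2 h : 2 <= rho h.
Proof. unfold rho, rho_of. lia. Qed.

Lemma pi_of_ge2 h N : 2 <= pi_of h N.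
Proof.
  unfold pi_of. set (r := rho_of h N).
  assert (Hr : 2 <= r) by (unfold r, rho_of; lia).
  assert (1 <= r ^ h) by (apply Nat.neq_0_lt_0, Nat.pow_nonzero; lia).
  assert (2 <= (h+1)*(h+1)*r^(h+1)).
  { assert (r <= r^(h+1)). { rewrite <- (Nat.pow_1_r r) at 1. apply Nat.pow_le_mono_r; lia. }
    nia. }
  eapply Nat.le_trans with ((h+1)*(h+1)*r^(h+1)). lia.
  rewrite <- (Nat.pow_1_r ((h+1)*(h+1)*r^(h+1))) at 1.
  apply Nat.pow_le_mono_r; lia.
Qed.

Lemma pi_ge2 h : 2 <= pi h.
Proof. apply pi_of_ge2. Qed.

Lemma a_ge_pow2 h : 2 ^ (h+2) <= a h.
Proof. unfold a, a_of. apply Nat.pow_le_mono_l. apply pi_of_ge2. Qed.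

Lemma a_ge2 h : 2 <= a h.
Proof.
  pose proof (a_ge_pow2 h).
  assert (2 <= 2^(h+2)). { rewrite <- (Nat.pow_1_r 2) at 1. apply Nat.pow_le_mono_r; lia. }
  lia.
Qed.

Lemma M_eq h : M h = a h * a h.
Proof. unfold M, M_of, a. simpl. lia. Qed.

Lemma M_ge4 h : 4 <= M h.
Proof. rewrite M_eq. pose proof (a_ge2 h). nia. Qed.

Lemma levelsize_S h : levelsize (S h) = levelsize h * M h.
Proof. reflexivity. Qed.

Lemma levelsize_pos h : 1 <= levelsize h.
Proof. induction h. simpl; lia. rewrite levelsize_S. pose proof (M_ge4 h). nia. Qed.

Lemma levelsize_mono h k : h <= k -> levelsize h <= levelsize k.
Proof.
  induction 1. lia. rewrite levelsize_S. pose proof (M_ge4 m). nia.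
Qed.

Lemma pi_mono h k : h <= k -> pi h <= pi k.
Proof.
  intro Hhk. unfold pi, pi_of.
  pose proof (levelsize_mono _ _ Hhk) as HL.
  assert (Hr : rho_of h (levelsize h) <= rho_of k (levelsize k)) by (unfold rho_of; lia).
  set (r := rho_of h (levelsize h)) in *. set (r' := rho_of k (levelsize k)) in *.
  assert (2 <= r) by (unfold r, rho_of; lia).
  apply Nat.pow_le_mono.
  - apply Nat.neq_mul_0; split. nia. apply Nat.pow_nonzero; lia.
  - apply Nat.mul_le_mono. nia. apply Nat.pow_le_mono; lia.
  - apply Nat.pow_le_mono; lia.
Qed.

Lemma a_ge_pi h k : h <= k -> pi h ^ (h+2) <= a k.
Proof.
  intro. unfold a, a_of. fold (pi k). apply Nat.pow_le_mono. pose proof (pi_ge2 h); lia.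
  apply pi_mono; auto. lia.
Qed.

Definition good (hs k n : nat) : Prop :=
  match hs with 0 => M k <= n | S _ => (M k - n)^hs <= a k ^ (hs - 1) end.

Open Scope R_scope.
Lemma real_key (A D : R) (H : nat) : (1 < A)%R -> (1 <= D)%R -> (1 <= H)%nat ->
  ((1 + 1 / INR H) <= ln (A*A / D) / ln A <-> D ^ H <= A ^ (H - 1))%R.
Proof.
  intros HA HD HH.
  assert (lA : (0 < ln A)%R) by (rewrite <- ln_1; apply ln_increasing; lra).
  assert (HDp : (0 < D)%R) by lra.
  assert (HHp : (0 < INR H)%R) by (apply lt_0_INR; lia).
  assert (E : (ln (A*A/D) = 2 * ln A - ln D)%R).
  { unfold Rdiv. rewrite ln_mult, ln_mult, ln_Rinv; try lra.
    all: try (apply Rmult_lt_0_compat); try (apply Rinv_0_lt_compat); nra. }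
  rewrite E.
  assert (P1 : (D ^ H <= A ^ (H-1) <-> ln (D^H) <= ln (A^(H-1)))%R).
  { split; intro X.
    - destruct (Rle_lt_or_eq_dec _ _ X). left. apply ln_increasing; auto. apply pow_lt; lra.
      right; congruence.
    - destruct (Rle_lt_or_eq_dec _ _ X). left. apply ln_lt_inv; auto. apply pow_lt; lra.
      apply pow_lt; lra. right. apply ln_inv; auto. apply pow_lt; lra. apply pow_lt; lra. }
  rewrite P1. rewrite !ln_pow by lra. rewrite minus_INR by lia. simpl INR.
  split; intro X.
  - apply Rmult_le_reg_r with (/ ln A). apply Rinv_0_lt_compat; lra.
    apply Rmult_le_compat_l with (r := INR H) in X; [|lra].
    replace ((INR H - 1) * ln A * / ln A)%R with (INR H - 1)%R by (field; lra).
    replace (INR H * (1 + 1 / INR H))%R with (INR H + 1)%R in X by (field; lra).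
    replace (INR H * ((2 * ln A - ln D) / ln A))%R with (2 * INR H - INR H * ln D / ln A)%R in X by (field; lra).
    replace (INR H * ln D * / ln A)%R with (INR H * ln D / ln A)%R by (field; lra). lra.
  - apply Rmult_le_reg_l with (INR H). lra.
    replace (INR H * (1 + 1 / INR H))%R with (INR H + 1)%R by (field; lra).
    replace (INR H * ((2 * ln A - ln D) / ln A))%R with (2 * INR H - INR H * ln D / ln A)%R by (field; lra).
    assert (INR H * ln D / ln A <= INR H - 1)%R.
    { apply Rmult_le_reg_r with (ln A). lra.
      replace (INR H * ln D / ln A * ln A)%R with (INR H * ln D)%R by (field; lra). lra. }
    lra.
Qed.

Close Scope R_scope.
Lemma mu_good hs k n : n <= M k -> (xge (mu k n) (bound hs) <-> good hs k n).
Proof.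
  intro Hn. unfold mu, good, bound.
  destruct (Nat.ltb_spec n (M k)) as [Hl|Hl].
  - destruct hs as [|hs].
    + simpl. split; [discriminate|lia].
    + simpl xge. rewrite M_eq at 1. rewrite mult_INR.
      pose proof (a_ge2 k) as Ha.
      rewrite (real_key (INR (a k)) (INR (M k - n)) (S hs)).
      * rewrite <- !pow_INR. split; intro X. apply INR_le; auto. apply le_INR; auto.
      * apply lt_1_INR. lia.
      * apply (le_INR 1). lia.
      * lia.
  - destruct hs as [|hs]; unfold xge.
    + split; auto; lia.
    + split; auto. intros _. replace (M k - n) with 0 by lia. rewrite Nat.pow_0_l by lia. lia.
Qed.

Definition prefixb (s t : list nat) : bool :=
  if list_eq_dec Nat.eq_dec (firstn (length s) t) s then true else false.

Lemma prefixb_spec s t : prefixb s t = true <-> prefix s t.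
Proof. unfold prefixb, prefix. destruct list_eq_dec; split; congruence. Qed.

Lemma prefix_iff s t : prefix s t <-> exists r, t = s ++ r.
Proof.
  unfold prefix. split.
  - intro H. exists (skipn (length s) t). rewrite <- H at 1. symmetry. apply firstn_skipn.
  - intros [r ->]. rewrite firstn_app, Nat.sub_diag, firstn_O, app_nil_r, firstn_all. auto.
Qed.

Lemma prefix_refl s : prefix s s.
Proof. apply prefix_iff. exists []. rewrite app_nil_r; auto. Qed.

Lemma prefix_app s r : prefix s (s ++ r).
Proof. apply prefix_iff. eauto. Qed.

Lemma prefix_trans s t u : prefix s t -> prefix t u -> prefix s u.
Proof. rewrite !prefix_iff. intros [r1 ->] [r2 ->]. exists (r1 ++ r2). rewrite app_assoc; auto. Qed.

Lemma prefix_len s t : prefix s t -> length s <= length t.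
Proof. rewrite prefix_iff. intros [r ->]. rewrite length_app. lia. Qed.

Lemma prefix_antisym s t : prefix s t -> length t <= length s -> s = t.
Proof. rewrite prefix_iff. intros [r ->] H. rewrite length_app in H. destruct r; simpl in *. rewrite app_nil_r; auto. lia. Qed.

Lemma prefix_nil t : prefix [] t.
Proof. apply prefix_iff. exists t; reflexivity. Qed.

Lemma prefix_snoc u l t : prefix (u ++ [l]) t -> prefix u t.
Proof. intro H. eapply prefix_trans; [|exact H]. apply prefix_app. Qed.

Lemma prefix_of_snoc t u l : prefix t (u ++ [l]) -> prefix t u \/ t = u ++ [l].
Proof.
  rewrite !prefix_iff. intros [r Hr]. destruct r as [|x r] using rev_ind.
  - right. rewrite app_nil_r in Hr; auto.
  - left. exists r. rewrite app_assoc in Hr. apply app_inj_tail in Hr. destruct Hr; auto.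
Qed.

Lemma prefix_ext u s : prefix u s -> length u < length s -> prefix (u ++ [nth (length u) s 0]) s.
Proof.
  rewrite !prefix_iff. intros [r ->] H. rewrite length_app in H. destruct r as [|x r]. simpl in H; lia.
  exists r. rewrite nth_middle. rewrite <- app_assoc. auto.
Qed.

Lemma prefix_nth u s : prefix u s -> forall i, i < length u -> nth i s 0 = nth i u 0.
Proof. rewrite prefix_iff. intros [r ->] i Hi. apply app_nth1; auto. Qed.

Definition sumf (g : nat -> nat) (L : list nat) : nat := fold_right Nat.add 0 (map g L).

Lemma sumf_app g L1 L2 : sumf g (L1 ++ L2) = sumf g L1 + sumf g L2.
Proof. unfold sumf. rewrite map_app, fold_right_app. induction L1; simpl; lia. Qed.

Lemma sumf_le g h L : (forall l, In l L -> g l <= h l) -> sumf g L <= sumf h L.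
Proof. induction L as [|a0 L IHL]; simpl; auto. intros H. unfold sumf in *; simpl. specialize (IHL (fun l Hl => H l (or_intror Hl))). specialize (H a0 (or_introl eq_refl)). lia. Qed.

Lemma sumf_const c L : sumf (fun _ => c) L = length L * c.
Proof. induction L as [|a0 L IHL]; simpl; auto. unfold sumf in *; simpl. rewrite IHL. lia. Qed.

Lemma sumf_mulr g K L : sumf (fun l => g l * K) L = sumf g L * K.
Proof. induction L as [|a0 L IHL]; simpl; auto. unfold sumf in *; simpl. rewrite IHL. lia. Qed.

Lemma sumf_if (f : nat -> bool) A B L :
  sumf (fun l => if f l then A else B) L = length (filter f L) * A + length (filter (fun l => negb (f l)) L) * B.
Proof. induction L as [|a0 L IHL]; simpl; auto. unfold sumf in *; simpl. rewrite IHL. destruct (f a0); simpl; lia. Qed.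

Lemma sumf_single g n x : x < n -> (forall l, l <> x -> g l = 0) -> sumf g (seq 0 n) = g x.
Proof.
  intros Hx Hg. induction n. lia.
  rewrite seq_S, sumf_app. simpl. unfold sumf at 2; simpl.
  destruct (Nat.eq_dec x n).
  - subst. assert (sumf g (seq 0 n) = 0).
    { clear Hx IHn. assert (forall l, In l (seq 0 n) -> g l <= 0).
      { intros l Hl. apply in_seq in Hl. rewrite Hg; lia. }
      pose proof (sumf_le g (fun _ => 0) _ H). rewrite sumf_const in H0. lia. }
    lia.
  - rewrite IHn by lia. rewrite (Hg n) by auto. lia.
Qed.

Lemma sumf_ext g h L : (forall l, In l L -> g l = h l) -> sumf g L = sumf h L.
Proof. intro H. apply Nat.le_antisymm; apply sumf_le; intros; rewrite H; auto. Qed.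

Lemma succ_count_le p u : succ_count p u <= M (length u).
Proof. unfold succ_count. rewrite <- (length_seq (M (length u)) 0) at 2. apply filter_length_le. Qed.

Lemma succ_pos p u : 1 <= succ_count p u -> exists l, l < M (length u) /\ p (u ++ [l]) = true.
Proof.
  unfold succ_count. intro H. destruct (filter _ _) as [|l L] eqn:E. simpl in H; lia.
  assert (In l (filter (fun l => p (u ++ [l])) (seq 0 (M (length u))))) by (rewrite E; left; auto).
  apply filter_In in H0. destruct H0 as [H1 H2]. apply in_seq in H1. exists l. split; auto; lia.
Qed.

Lemma two_succ p u l1 l2 : l1 <> l2 -> l1 < M (length u) -> l2 < M (length u) ->
  p (u ++ [l1]) = true -> p (u ++ [l2]) = true -> 2 <= succ_count p u.
Proof.
  intros. unfold succ_count.
  change 2 with (length [l1; l2]). apply NoDup_incl_length.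
  - constructor. simpl; intuition. constructor. simpl; auto. constructor.
  - intros x Hx. simpl in Hx. apply filter_In. destruct Hx as [<-|[<-|[]]]; split; auto; apply in_seq; lia.
Qed.

Lemma filter_le1 (f : nat -> bool) L c : NoDup L -> (forall l, In l L -> f l = true -> l = c) -> length (filter f L) <= 1.
Proof.
  intros ND H. change 1 with (length [c]). apply NoDup_incl_length.
  apply NoDup_filter; auto.
  intros x Hx. apply filter_In in Hx. destruct Hx. left. symmetry. apply H; auto.
Qed.

Lemma succ_le1 p u c : (forall l, p (u ++ [l]) = true -> l = c) -> succ_count p u <= 1.
Proof. intro H. unfold succ_count. apply (filter_le1 _ _ c). apply seq_NoDup. intros; auto. Qed.

Lemma miss_le1 p u c : (forall l, l < M (length u) -> l <> c -> p (u ++ [l]) = true) ->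
  M (length u) - succ_count p u <= 1.
Proof.
  intro H. unfold succ_count. pose proof (filter_length (fun l => p (u ++ [l])) (seq 0 (M (length u)))).
  rewrite length_seq in H0.
  assert (length (filter (fun l => negb (p (u ++ [l]))) (seq 0 (M (length u)))) <= 1).
  { apply (filter_le1 _ _ c). apply seq_NoDup. intros l Hl Hf. apply in_seq in Hl.
    destruct (Nat.eq_dec l c); auto. rewrite H in Hf by lia. discriminate. }
  lia.
Qed.

Lemma subtree_prefix p t u : subtree p -> p t = true -> prefix u t -> p u = true.
Proof.
  intros [_ [Hc _]] Ht Hp. apply prefix_iff in Hp. destruct Hp as [r ->].
  induction r as [|x r IH] using rev_ind. rewrite app_nil_r in Ht; auto.
  apply IH. rewrite app_assoc in Ht. eapply Hc; eauto.
Qed.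

Lemma inT_lt t : inT t -> forall i, i < length t -> nth i t 0 < M i.
Proof. auto. Qed.

Lemma inT_snoc u l : inT (u ++ [l]) -> l < M (length u).
Proof. intro H. specialize (H (length u)). rewrite length_app, nth_middle in H. simpl in H. apply H. lia. Qed.

Lemma diverge s t : ~ prefix s t -> ~ prefix t s ->
  exists u x y r1 r2, x <> y /\ s = u ++ x :: r1 /\ t = u ++ y :: r2.
Proof.
  revert t. induction s as [|x s IH]; intros t H1 H2.
  - exfalso. apply H1, prefix_nil.
  - destruct t as [|y t]. exfalso; apply H2, prefix_nil.
    destruct (Nat.eq_dec x y) as [<-|Hxy].
    + destruct (IH t) as [u [x' [y' [r1 [r2 [A [B C]]]]]]].
      * intro P. apply H1. apply prefix_iff in P. destruct P as [r ->]. apply prefix_iff. exists r; auto.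
      * intro P. apply H2. apply prefix_iff in P. destruct P as [r ->]. apply prefix_iff. exists r; auto.
      * exists (x :: u), x', y', r1, r2. subst. auto.
    + exists [], x, y, s, t. auto.
Qed.

Lemma prefix_dec s t : {prefix s t} + {~ prefix s t}.
Proof. destruct (prefixb s t) eqn:E. left; apply prefixb_spec; auto. right; intro H; apply prefixb_spec in H; congruence. Qed.

Lemma stem_comparable p st t : subtree p -> is_stem p st -> p t = true -> prefix st t \/ prefix t st.
Proof.
  intros Hs [[Hst Hsp] Hmin] Ht.
  destruct (prefix_dec st t) as [|H1]; auto. destruct (prefix_dec t st) as [|H2]; auto.
  exfalso. destruct (diverge _ _ H1 H2) as [u [x [y [r1 [r2 [A [B C]]]]]]].
  assert (Pux : p (u ++ [x]) = true). { apply (subtree_prefix p st); auto. rewrite B. apply prefix_iff. exists r1. rewrite <- app_assoc; auto. }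
  assert (Puy : p (u ++ [y]) = true). { apply (subtree_prefix p t); auto. rewrite C. apply prefix_iff. exists r2. rewrite <- app_assoc; auto. }
  assert (Hu : p u = true). { apply (subtree_prefix p _ u Hs Pux). apply prefix_app. }
  destruct Hs as [_ [_ HT]].
  pose proof (inT_snoc _ _ (HT _ Pux)). pose proof (inT_snoc _ _ (HT _ Puy)).
  assert (splitting p u) by (split; auto; eapply two_succ; eauto).
  apply Hmin in H3. rewrite B, length_app in H3. simpl in H3. lia.
Qed.

Lemma stem_unique p s1 s2 : subtree p -> is_stem p s1 -> is_stem p s2 -> s1 = s2.
Proof.
  intros Hs H1 H2.
  assert (length s1 = length s2) by (apply Nat.le_antisymm; [apply H1; apply H2| apply H2; apply H1]).
  destruct (stem_comparable p s1 s2 Hs H1 (proj1 (proj1 H2))) as [P|P].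
  - apply prefix_antisym; auto; lia.
  - symmetry; apply prefix_antisym; auto; lia.
Qed.

Lemma cone_stem q t : q t = true -> 2 <= succ_count q t ->
  (forall u, q u = true -> prefix u t \/ prefix t u) -> is_stem q t.
Proof.
  intros Ht Hs Hc. split. split; auto.
  intros u [Hu Hsu]. destruct (Nat.le_gt_cases (length t) (length u)) as [|Hlt]; auto.
  exfalso.
  assert (succ_count q u <= 1); [|lia].
  apply (succ_le1 _ _ (nth (length u) t 0)). intros l Hl.
  destruct (Hc _ Hl) as [P|P].
  - pose proof (prefix_nth _ _ P (length u)). rewrite nth_middle in H. symmetry; apply H. rewrite length_app; simpl; lia.
  - pose proof (prefix_len _ _ P) as PL. rewrite length_app in PL; simpl in PL.
    assert (t = u ++ [l]) by (apply prefix_antisym; auto; rewrite length_app; simpl; lia).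
    subst t. rewrite nth_middle. auto.
Qed.

Lemma good_miss hs k n : good hs k n -> n <= M k -> M k - n <= a k.
Proof.
  intros G Hn. destruct hs as [|hs]; unfold good in G. lia.
  pose proof (a_ge2 k).
  destruct (Nat.le_gt_cases (M k - n) (a k)); auto. exfalso.
  assert (a k ^ S hs < (M k - n) ^ S hs) by (apply Nat.pow_lt_mono_l; lia).
  assert (a k ^ (S hs - 1) <= a k ^ S hs) by (apply Nat.pow_le_mono_r; lia). lia.
Qed.

Lemma good_succ2 hs k n : good hs k n -> n <= M k -> 2 <= n.
Proof.
  intros G Hn. pose proof (good_miss _ _ _ G Hn). rewrite M_eq in *. pose proof (a_ge2 k). nia.
Qed.

Lemma Etilde_good p st u : Etilde p -> is_stem p st -> p u = true -> prefix st u ->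
  good (length st) (length u) (succ_count p u).
Proof.
  intros [Hs [st' [Hst' Hmu]]] Hst Hu Hp.
  rewrite (stem_unique p st st') in * by auto.
  apply mu_good. apply succ_count_le. apply Hmu; auto.
Qed.

Fixpoint interN (p : nat -> tree) (n : nat) : tree :=
  match n with 0 => fun _ => true | S n' => fun u => interN p n' u && p n' u end.

Lemma interN_spec p n u : interN p n u = true <-> forall i, i < n -> p i u = true.
Proof.
  induction n; simpl. split; auto; intros; lia.
  rewrite Bool.andb_true_iff, IHn. split.
  - intros [A B] i Hi. destruct (Nat.eq_dec i n). subst; auto. apply A; lia.
  - intros A. split; auto.
Qed.

Lemma miss_and (f g : nat -> bool) L :
  length L - length (filter (fun l => f l && g l) L) <=
  (length L - length (filter f L)) + (length L - length (filter g L)).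
Proof.
  induction L as [|x L IH]; [simpl; lia|].
  pose proof (filter_length_le f L). pose proof (filter_length_le g L).
  pose proof (filter_length_le (fun l => f l && g l) L).
  cbn [filter length]. destruct (f x), (g x); cbn [andb length]; lia.
Qed.

Definition miss (p : tree) (u : list nat) := M (length u) - succ_count p u.

Lemma succ_count_ext q r u : (forall l, q (u ++ [l]) = r (u ++ [l])) -> succ_count q u = succ_count r u.
Proof. intro H. unfold succ_count. f_equal. apply filter_ext. auto. Qed.

Lemma miss_interN p n u : miss (interN p n) u <= sumf (fun i => miss (p i) u) (seq 0 n).
Proof.
  induction n. unfold miss, succ_count. cbn [interN].
  rewrite filter_true, length_seq. unfold sumf; simpl; lia.
  rewrite seq_S, sumf_app. unfold sumf at 2. simpl.
  unfold miss, succ_count in *. simpl.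
  pose proof (miss_and (fun l => interN p n (u ++ [l])) (fun l => p n (u ++ [l])) (seq 0 (M (length u)))).
  rewrite length_seq in H. lia.
Qed.

Lemma max_exists (d : nat -> nat) n h B : 1 <= h -> (forall i, i < n -> d i ^ h <= B) ->
  exists m, m ^ h <= B /\ forall i, i < n -> d i <= m.
Proof.
  intros Hh Hd. induction n.
  - exists 0. split. rewrite Nat.pow_0_l by lia. lia. intros; lia.
  - destruct IHn as [m [A B']]. intros; apply Hd; lia.
    exists (Nat.max m (d n)). split.
    + destruct (Nat.max_spec m (d n)) as [[_ ->]|[_ ->]]; auto.
    + intros i Hi. destruct (Nat.eq_dec i n). subst; lia. specialize (B' i). lia.
Qed.

Lemma good_lift d A hs h : 1 <= hs -> hs <= h -> 1 <= A -> d ^ hs <= A ^ (hs - 1) -> d ^ h <= A ^ (h - 1).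
Proof.
  intros H1 H2 HA Hd.
  apply (Nat.pow_le_mono_l_iff _ _ hs). lia.
  rewrite <- !Nat.pow_mul_r. rewrite Nat.mul_comm, Nat.pow_mul_r.
  eapply Nat.le_trans. apply Nat.pow_le_mono_l. exact Hd.
  rewrite <- Nat.pow_mul_r. apply Nat.pow_le_mono_r. lia. nia.
Qed.

Lemma key_arith P A D m h H : 1 <= h -> h <= H -> 1 <= A -> D <= P * m -> m ^ h <= A ^ (h - 1) ->
  P ^ (h * H) <= A ^ (H - h) -> D ^ H <= A ^ (H - 1).
Proof.
  intros Hh HH HA HD Hm HP.
  apply (Nat.pow_le_mono_l_iff _ _ h). lia.
  rewrite <- !Nat.pow_mul_r.
  eapply Nat.le_trans. apply Nat.pow_le_mono_l. exact HD.
  rewrite Nat.pow_mul_l.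
  replace (m ^ (H * h)) with ((m ^ h) ^ H) by (rewrite <- Nat.pow_mul_r; f_equal; lia).
  eapply Nat.le_trans. apply Nat.mul_le_mono. rewrite Nat.mul_comm. exact HP. apply Nat.pow_le_mono_l. exact Hm.
  rewrite <- Nat.pow_mul_r, <- Nat.pow_add_r. apply Nat.pow_le_mono_r. lia.
  destruct h as [|h]; [lia|]. destruct H as [|H]; [lia|]. replace (S h - 1) with h by lia. replace (S H - 1) with H by lia. replace (S H - S h) with (H - h) by lia. nia.
Qed.

Lemma succ_le_M p u : succ_count p u <= M (length u).
Proof. apply succ_count_le. Qed.

Lemma claimD h p s : length s = h ->
  (forall i, i < pi h -> Etilde (p i)) ->
  (forall i, i < pi h -> p i s = true /\ exists st, is_stem (p i) st /\ prefix st s) ->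
  forall u, interN p (pi h) u = true -> prefix s u ->
  good (S (h * h + h)) (length u) (succ_count (interN p (pi h)) u).
Proof.
  intros Hl HE Hs u Hu Hsu. unfold good.
  pose proof (miss_interN p (pi h) u) as HD. fold (miss (interN p (pi h)) u).
  set (D := miss (interN p (pi h)) u) in *.
  assert (Hk : h <= length u) by (subst; apply prefix_len; auto).
  assert (Hi : forall i, i < pi h -> exists hs, hs <= h /\ good hs (length u) (succ_count (p i) u)).
  { intros i Hi. destruct (Hs i Hi) as [_ [st [Hst Hp]]].
    exists (length st). split. subst; apply prefix_len; auto.
    apply Etilde_good; auto. apply interN_spec with (n := pi h); auto. eapply prefix_trans; eauto. }
  destruct h as [|h'].
  - assert (D = 0).
    { assert (sumf (fun i => miss (p i) u) (seq 0 (pi 0)) <= sumf (fun _ => 0) (seq 0 (pi 0))).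
      { apply sumf_le. intros i Hin. apply in_seq in Hin. destruct (Hi i (proj2 Hin)) as [hs [Hhs G]].
        replace hs with 0 in G by lia. unfold good in G. unfold miss. lia. }
      rewrite sumf_const in H. lia. }
    rewrite H. rewrite Nat.pow_0_l by lia. apply Nat.le_0_l.
  - set (h := S h') in *.
    destruct (max_exists (fun i => miss (p i) u) (pi h) h (a (length u) ^ (h - 1))) as [m [Hm Hmi]].
    { lia. }
    { intros i Hi'. destruct (Hi i Hi') as [hs [Hhs G]]. unfold miss.
      destruct hs as [|hs]. unfold good in G. replace (M (length u) - succ_count (p i) u) with 0 by lia.
      rewrite Nat.pow_0_l by lia. lia.
      apply (good_lift _ _ (S hs)); auto; try lia. pose proof (a_ge2 (length u)); lia. }
    replace (S (h * h + h)) with (h * h + h + 1) by lia.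
    apply (key_arith (pi h) (a (length u)) D m h (h * h + h + 1)).
    + lia.
    + lia.
    + pose proof (a_ge2 (length u)); lia.
    + eapply Nat.le_trans. exact HD.
      eapply Nat.le_trans. apply (sumf_le _ (fun _ => m)). intros i Hin. apply in_seq in Hin. apply Hmi. lia.
      rewrite sumf_const, length_seq. lia.
    + exact Hm.
    + replace (h * h + h + 1 - h) with (h * h + 1) by lia.
      eapply Nat.le_trans; [|apply Nat.pow_le_mono_l; apply (a_ge_pi h (length u)); lia].
      rewrite <- Nat.pow_mul_r. apply Nat.pow_le_mono_r. pose proof (pi_ge2 h); lia. nia.
Qed.

Lemma extend_path (q : tree) s H :
  (forall u, q u = true -> prefix s u -> good H (length u) (succ_count q u)) ->
  forall j u, q u = true -> prefix s u -> exists w, length w = length u + j /\ prefix u w /\ q w = true.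
Proof.
  intros G j. induction j; intros u Hu Hs.
  - exists u. split. lia. split; auto. apply prefix_refl.
  - pose proof (good_succ2 _ _ _ (G u Hu Hs) (succ_le_M q u)).
    destruct (succ_pos q u) as [l [Hl Hq]]. lia.
    destruct (IHj (u ++ [l])) as [w [A [B C]]]; auto. eapply prefix_trans; [exact Hs|apply prefix_app].
    exists w. rewrite length_app in A; simpl in A. split. lia. split; auto. eapply prefix_trans; [|exact B]. apply prefix_app.
Qed.

Lemma cone_prefix_closed t u l : (prefixb (u ++ [l]) t || prefixb t (u ++ [l])) = true ->
  (prefixb u t || prefixb t u) = true.
Proof.
  rewrite !orb_true_iff, !prefixb_spec. intros [P|P].
  - left. eapply prefix_snoc; eauto.
  - apply prefix_of_snoc in P. destruct P as [P|P]. right; auto. left. rewrite P. apply prefix_app.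
Qed.

Lemma partA h p s : length s = h ->
  (forall i, i < pi h -> Etilde (p i)) ->
  (forall i, i < pi h -> p i s = true /\ exists st, is_stem (p i) st /\ prefix st s) ->
  exists q, Etilde q /\ forall i, i < pi h -> leE q (p i).
Proof.
  intros Hl HE Hs.
  set (I := interN p (pi h)).
  pose proof (claimD h p s Hl HE Hs) as CD. fold I in CD.
  assert (HIs : I s = true). { apply interN_spec. intros i Hi. apply Hs; auto. }
  destruct (extend_path I s _ CD (h * h + 1) s HIs (prefix_refl s)) as [t [Ht [Hst HIt]]].
  set (q := fun u => (prefixb u t || prefixb t u) && I u).
  assert (Hpi : 0 < pi h) by (pose proof (pi_ge2 h); lia).
  assert (Hsub : forall i, i < pi h -> subtree (p i)) by (intros i Hi; apply HE; auto).
  assert (Hsucc : forall u, prefix t u -> succ_count q u = succ_count I u).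
  { intros u Hu. apply succ_count_ext. intro l. unfold q.
    replace (prefixb t (u ++ [l])) with true. rewrite orb_true_r; auto.
    symmetry; apply prefixb_spec. eapply prefix_trans; [exact Hu| apply prefix_app]. }
  exists q. split.
  - split; [split; [|split]|].
    + unfold q. replace (prefixb [] t) with true by (symmetry; apply prefixb_spec, prefix_nil).
      simpl. apply interN_spec. intros i Hi. apply (subtree_prefix (p i) s); auto. apply Hs; auto. apply prefix_nil.
    + intros u l. unfold q. rewrite !andb_true_iff. intros [A B]. split.
      eapply cone_prefix_closed; eauto.
      apply interN_spec. intros i Hi. apply (subtree_prefix (p i) (u ++ [l])); auto.
      apply interN_spec with (n := pi h); auto. apply prefix_app.
    + intros u. unfold q. rewrite andb_true_iff. intros [_ B].
      apply (Hsub 0 Hpi). apply interN_spec with (n := pi h); auto.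
    + exists t. assert (Hq : q t = true).
      { unfold q. rewrite HIt. replace (prefixb t t) with true by (symmetry; apply prefixb_spec, prefix_refl). auto. }
      assert (Hlt : length t = S (h * h + h)) by lia.
      assert (Hstem : is_stem q t).
      { apply cone_stem; auto.
        - rewrite Hsucc by apply prefix_refl. apply (good_succ2 (S (h*h+h)) (length t)). apply CD; auto. apply succ_le_M.
        - intros u Hu. unfold q in Hu. apply andb_true_iff in Hu. destruct Hu as [Hu _].
          apply orb_true_iff in Hu. rewrite !prefixb_spec in Hu. auto. }
      split; auto.
      intros u Hu Htu. unfold mu_node. apply mu_good. apply succ_le_M.
      rewrite Hsucc by auto. rewrite Hlt. apply CD.
      unfold q in Hu; apply andb_true_iff in Hu; apply Hu.
      eapply prefix_trans; eauto.
  - intros i Hi u Hu. unfold q in Hu. apply andb_true_iff in Hu. destruct Hu as [_ Hu].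
    apply interN_spec with (n := pi h); auto.
Qed.

Fixpoint node (i j : nat) : list nat :=
  match i with 0 => [] | S i' => node i' (j / M i') ++ [j mod M i'] end.

Lemma node_len i j : length (node i j) = i.
Proof. revert j; induction i; intros; simpl; auto. rewrite length_app, IHi. simpl; lia. Qed.

Lemma node_surj i t : length t = i -> inT t -> exists j, j < levelsize i /\ node i j = t.
Proof.
  revert t. induction i; intros t Hl HT.
  - destruct t; simpl in Hl; try lia. exists 0. split. simpl; lia. auto.
  - destruct (exists_last (l := t)) as [u [x ->]]. intro E; subst; simpl in Hl; lia.
    rewrite length_app in Hl; simpl in Hl.
    assert (Hx : x < M i). { pose proof (inT_snoc _ _ HT). replace i with (length u) by lia. auto. }
    destruct (IHi u) as [j [Hj Hn]]. lia.
    { intros k Hk. specialize (HT k). rewrite length_app, app_nth1 in HT by lia. apply HT. lia. }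
    exists (j * M i + x). pose proof (M_ge4 i). split.
    + rewrite levelsize_S. nia.
    + simpl. rewrite Nat.div_add_l by lia. rewrite Nat.div_small by lia. rewrite Nat.add_0_r, Hn.
      rewrite Nat.add_comm, Nat.Div0.mod_add, Nat.mod_small by lia. auto.
Qed.

Lemma node_inT i j : j < levelsize i -> inT (node i j).
Proof.
  revert j; induction i; intros j Hj k Hk. simpl in Hk; lia.
  rewrite levelsize_S in Hj. cbn [node] in *.
  rewrite length_app, node_len in Hk; simpl in Hk.
  pose proof (M_ge4 i).
  destruct (Nat.eq_dec k i).
  - subst. rewrite <- (node_len i (j / M i)) at 1. rewrite nth_middle. apply Nat.mod_upper_bound. lia.
  - rewrite app_nth1 by (rewrite node_len; lia). apply IHi.
    apply Nat.Div0.div_lt_upper_bound. lia. rewrite node_len; lia.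
Qed.

Lemma Etilde_extend p st : Etilde p -> is_stem p st ->
  forall j u, p u = true -> prefix st u -> exists w, length w = length u + j /\ prefix u w /\ p w = true.
Proof.
  intros HE Hst. apply (extend_path p st (length st)). intros u Hu Hp. apply Etilde_good; auto.
Qed.

Definition Qset (i j : nat) (q : tree) : Prop :=
  Etilde q /\ q (node i j) = true /\ exists st, is_stem q st /\ prefix st (node i j).

Lemma partB1 : fg_linked rho pi.
Proof.
  exists Qset. split; [|split].
  - intros i j q H; apply H.
  - intros i j _ r Hr. apply (partA i r (node i j)). apply node_len.
    intros k Hk; apply Hr; auto. intros k Hk; apply Hr; auto.
  - intros q Hq. pose proof Hq as [Hs [st [Hst Hmu]]].
    exists (length st). intros i Hi.
    destruct (Etilde_extend q st Hq Hst (i - length st) st (proj1 (proj1 Hst)) (prefix_refl st)) as [w [Hw [Hsw Hqw]]].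
    destruct (node_surj i w) as [j [Hj Hn]]. lia. apply Hs; auto.
    exists j. split. unfold rho, rho_of. lia.
    unfold Qset. rewrite Hn. split; auto. split; auto. eauto.
Qed.

Lemma partB2 : fg_linked rho pi -> ccc.
Proof.
  intros [Q [HQ [Hlink Hcov]]] A HA Hanti.
  set (f := fun p => Cantor.to_nat (epsilon (inhabits (0,0)) (fun ij => fst ij < rho (fst ij) /\ snd ij < rho (fst ij) /\ Q (fst ij) (snd ij) p) )).
  exists (fun p => Cantor.to_nat (epsilon (inhabits (0,0)) (fun ij => snd ij < rho (fst ij) /\ Q (fst ij) (snd ij) p))).
  intros p q Hp Hq E. apply Cantor.to_nat_inj in E.
  assert (Gp : forall r, Etilde r -> exists ij, snd ij < rho (fst ij) /\ Q (fst ij) (snd ij) r).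
  { intros r Hr. destruct (Hcov r Hr) as [N HN]. destruct (HN N (le_n N)) as [j [Hj HQj]]. exists (N, j). auto. }
  pose proof (epsilon_spec (inhabits (0,0)) _ (Gp p (HA p Hp))) as Sp.
  pose proof (epsilon_spec (inhabits (0,0)) _ (Gp q (HA q Hq))) as Sq.
  rewrite E in Sp.
  set (ij := epsilon _ _) in Sq, Sp. destruct Sp as [Hj Qp]. destruct Sq as [_ Qq].
  destruct (classic (p = q)) as [|Hne]; auto. exfalso.
  apply (Hanti p q Hp Hq Hne).
  destruct (Hlink (fst ij) (snd ij) Hj (fun k => if k =? 0 then p else q)) as [r [Hr Hle]].
  { intros k _. destruct (k =? 0); auto. }
  pose proof (pi_ge2 (fst ij)).
  exists r. split; auto. split. apply (Hle 0); lia. apply (Hle 1); lia.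
Qed.

Definition inTb (u : list nat) : bool := forallb (fun i => nth i u 0 <? M i) (seq 0 (length u)).

Lemma inTb_spec u : inTb u = true <-> inT u.
Proof.
  unfold inTb, inT. rewrite forallb_forall. split.
  - intros H i Hi. apply Nat.ltb_lt. apply H. apply in_seq. lia.
  - intros H i Hi. apply in_seq in Hi. apply Nat.ltb_lt. apply H. lia.
Qed.

Definition avoidb (w : list nat) (x : nat -> nat) (u : list nat) : bool :=
  forallb (fun m => (m <? length w) || negb (nth m u 0 =? x m)) (seq 0 (length u)).

Lemma avoidb_spec w x u : avoidb w x u = true <-> forall m, m < length u -> length w <= m -> nth m u 0 <> x m.
Proof.
  unfold avoidb. rewrite forallb_forall. split.
  - intros H m Hm Hw E. specialize (H m (proj2 (in_seq _ _ _) (conj (Nat.le_0_l _) Hm))).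
    apply orb_true_iff in H. destruct H as [H|H]. apply Nat.ltb_lt in H; lia.
    rewrite E, Nat.eqb_refl in H. discriminate.
  - intros H m Hm. apply in_seq in Hm. destruct (Nat.ltb_spec m (length w)); auto. simpl.
    apply negb_true_iff. apply Nat.eqb_neq. apply H; lia.
Qed.

Definition rw (w : list nat) (x : nat -> nat) : tree :=
  fun u => inTb u && (prefixb u w || prefixb w u) && avoidb w x u.

Lemma rw_Etilde w x : inT w -> 1 <= length w -> Etilde (rw w x) /\ is_stem (rw w x) w.
Proof.
  intros Hw Hlw.
  assert (Hext : forall u l, rw w x u = true -> prefix w u -> l < M (length u) -> l <> x (length u) -> rw w x (u ++ [l]) = true).
  { intros u l Hu Hwu Hl Hx. unfold rw in *. rewrite !andb_true_iff in *. destruct Hu as [[A B] C].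
    rewrite inTb_spec in *. rewrite avoidb_spec in *. split; [split|].
    - intros i Hi. rewrite length_app in Hi; simpl in Hi. destruct (Nat.eq_dec i (length u)).
      subst. rewrite nth_middle; auto. rewrite app_nth1 by lia. apply A; lia.
    - apply orb_true_iff; right. apply prefixb_spec. eapply prefix_trans; [exact Hwu|apply prefix_app].
    - intros m Hm Hm2. rewrite length_app in Hm; simpl in Hm. destruct (Nat.eq_dec m (length u)).
      subst. rewrite nth_middle; auto. rewrite app_nth1 by lia. apply C; lia. }
  assert (Hrw : rw w x w = true).
  { unfold rw. rewrite !andb_true_iff. split; [split|].
    apply inTb_spec; auto. replace (prefixb w w) with true by (symmetry; apply prefixb_spec, prefix_refl); auto.
    apply avoidb_spec. intros; lia. }
  assert (Hmiss : forall u, rw w x u = true -> prefix w u -> M (length u) - succ_count (rw w x) u <= 1).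
  { intros u Hu Hwu. apply (miss_le1 _ _ (x (length u))). intros; apply Hext; auto. }
  assert (Hstem : is_stem (rw w x) w).
  { apply cone_stem; auto.
    - pose proof (Hmiss w Hrw (prefix_refl w)). pose proof (M_ge4 (length w)). lia.
    - intros u Hu. unfold rw in Hu. rewrite !andb_true_iff in Hu. destruct Hu as [[_ B] _].
      apply orb_true_iff in B. rewrite !prefixb_spec in B. auto. }
  split; auto. split.
  - split; [|split].
    + unfold rw. simpl. replace (prefixb [] w) with true by (symmetry; apply prefixb_spec, prefix_nil). auto.
    + intros u l. unfold rw. rewrite !andb_true_iff. intros [[A B] C]. split; [split|].
      * rewrite inTb_spec in *. intros i Hi. specialize (A i). rewrite length_app, app_nth1 in A by lia. apply A. simpl; lia.
      * eapply cone_prefix_closed; eauto.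
      * rewrite avoidb_spec in *. intros m Hm Hm2. specialize (C m). rewrite length_app, app_nth1 in C by lia. apply C; auto. simpl; lia.
    + intros u. unfold rw. rewrite !andb_true_iff. intros [[A _] _]. apply inTb_spec; auto.
  - exists w. split; auto. intros u Hu Hwu. unfold mu_node. apply mu_good. apply succ_count_le.
    pose proof (Hmiss u Hu Hwu). destruct (length w) as [|n] eqn:E. lia. unfold good.
    eapply Nat.le_trans. apply Nat.pow_le_mono_l. exact H. rewrite Nat.pow_1_l.
    apply Nat.neq_0_lt_0, Nat.pow_nonzero. pose proof (a_ge2 (length u)); lia.
Qed.

Lemma partC (x : nat -> nat) (p : tree) : Etilde p ->
  exists q, Etilde q /\ leE q p /\
    exists n, forall t, q t = true -> forall m, n <= m -> m < length t -> nth m t 0 <> x m.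
Proof.
  intros HE. pose proof HE as [Hs [st [Hst Hmu]]].
  destruct (Etilde_extend p st HE Hst 1 st (proj1 (proj1 Hst)) (prefix_refl st)) as [w [Hw [Hsw Hpw]]].
  assert (HwT : inT w) by (apply Hs; auto).
  destruct (rw_Etilde w x HwT) as [HrE HrS]. lia.
  set (pp := fun i => if i =? 1 then rw w x else p).
  destruct (partA (length w) pp w eq_refl) as [q [Hq Hle]].
  - intros i Hi. unfold pp. destruct (i =? 1); auto.
  - intros i Hi. unfold pp. destruct (i =? 1).
    + split. unfold rw. rewrite !andb_true_iff. split; [split|].
      apply inTb_spec; auto. replace (prefixb w w) with true by (symmetry; apply prefixb_spec, prefix_refl); auto.
      apply avoidb_spec. intros; lia.
      exists w. split; auto. apply prefix_refl.
    + split; auto. exists st; auto.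
  - pose proof (pi_ge2 (length w)).
    exists q. split; auto. split. apply (Hle 0). lia.
    exists (length w). intros t Ht m Hm Hmt.
    assert (rw w x t = true) by (apply (Hle 1); auto; lia).
    unfold rw in H0. rewrite !andb_true_iff in H0. destruct H0 as [_ C]. rewrite avoidb_spec in C. apply C; auto.
Qed.

Lemma count_ext_S p u k : count_ext p u (S k) = sumf (fun l => count_ext p (u ++ [l]) k) (seq 0 (M (length u))).
Proof. reflexivity. Qed.

Lemma count_zero p : subtree p -> forall k u, p u = false -> count_ext p u k = 0.
Proof.
  intros Hs k. induction k; intros u Hu. simpl. rewrite Hu; auto.
  rewrite count_ext_S.
  assert (sumf (fun l => count_ext p (u ++ [l]) k) (seq 0 (M (length u))) <= sumf (fun _ => 0) (seq 0 (M (length u)))).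
  { apply sumf_le. intros l _. rewrite IHk. lia. destruct (p (u ++ [l])) eqn:E; auto.
    rewrite (subtree_prefix p (u ++ [l]) u Hs E (prefix_app u [l])) in Hu. discriminate. }
  rewrite sumf_const in H. lia.
Qed.

Fixpoint Fk (n k : nat) : nat := match k with 0 => 1 | S k' => M n * Fk (S n) k' end.

Lemma count_full k u : count_ext (fun _ => true) u k = Fk (length u) k.
Proof.
  revert u; induction k; intros u. reflexivity.
  rewrite count_ext_S. simpl Fk.
  rewrite (sumf_ext _ (fun _ => Fk (S (length u)) k)). rewrite sumf_const, length_seq. auto.
  intros l _. rewrite IHk, length_app. simpl. f_equal. lia.
Qed.

Lemma Fk_pos n k : 1 <= Fk n k.
Proof. revert n; induction k; intros; simpl. lia. pose proof (M_ge4 n). specialize (IHk (S n)). nia. Qed.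

Lemma sumf_add g h L : sumf (fun l => g l + h l) L = sumf g L + sumf h L.
Proof. induction L as [|x L IH]; simpl; auto. unfold sumf in *; simpl. rewrite IH. lia. Qed.

Lemma deficiency p s : Etilde p -> is_stem p s ->
  forall k u, p u = true -> prefix s u ->
  count_ext p u k <= Fk (length u) k /\
  (Fk (length u) k - count_ext p u k) * 2 ^ (length u + 1) <= Fk (length u) k.
Proof.
  intros HE Hst k. induction k; intros u Hu Hsu.
  - simpl. rewrite Hu. lia.
  - rewrite count_ext_S. simpl Fk.
    set (n := length u). set (F' := Fk (S n) k).
    set (c := fun l => count_ext p (u ++ [l]) k).
    set (f := fun l => p (u ++ [l])).
    assert (Hc : forall l, In l (seq 0 (M n)) -> c l <= F' /\ (if f l then (F' - c l) * 2 ^ (n + 2) <= F' else c l = 0)).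
    { intros l Hl. unfold c, f. destruct (p (u ++ [l])) eqn:E.
      - destruct (IHk (u ++ [l]) E) as [A B]. eapply prefix_trans; [exact Hsu|apply prefix_app].
        rewrite length_app in A, B. simpl in A, B. fold n in A, B.
        replace (n + 1 + 1) with (n + 2) in B by lia. replace (n + 1) with (S n) in A, B by lia. split; auto.
      - rewrite count_zero; auto. lia. apply HE. }
    set (g := fun l => F' - c l).
    assert (E1 : sumf g (seq 0 (M n)) + sumf c (seq 0 (M n)) = M n * F').
    { rewrite <- sumf_add. rewrite (sumf_ext _ (fun _ => F')). rewrite sumf_const, length_seq. lia.
      intros l Hl. unfold g. pose proof (proj1 (Hc l Hl)). lia. }
    assert (E2 : sumf (fun l => g l * 2 ^ (n + 2)) (seq 0 (M n)) <=
                 sumf (fun l => if f l then F' else F' * 2 ^ (n + 2)) (seq 0 (M n))).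
    { apply sumf_le. intros l Hl. destruct (Hc l Hl) as [A B]. unfold g. destruct (f l). auto. rewrite B. lia. }
    rewrite sumf_mulr, sumf_if in E2.
    pose proof (filter_length f (seq 0 (M n))) as E3. rewrite length_seq in E3.
    change (length (filter f (seq 0 (M n)))) with (succ_count p u) in E2, E3.
    pose proof (Etilde_good p s u HE Hst Hu Hsu) as G.
    pose proof (good_miss _ _ _ G (succ_count_le p u)) as Hm. fold n in Hm.
    pose proof (a_ge_pow2 n) as Ha. rewrite M_eq in *.
    assert (E4 : 2 ^ (n + 2) = 2 * 2 ^ (n + 1)) by (rewrite !Nat.pow_add_r; simpl; lia).
    rewrite E4 in *.
    set (P2 := 2 ^ (n + 1)) in *.
    set (sc := succ_count p u) in *.
    set (SG := sumf g (seq 0 (a n * a n))) in *.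
    set (SC := sumf c (seq 0 (a n * a n))) in *.
    set (NM := length (filter (fun l => negb (f l)) (seq 0 (a n * a n)))) in *.
    assert (NM <= a n) by lia.
    assert (NM * (2 * P2) <= a n * a n) by nia.
    split. nia.
    replace (a n * a n * F' - SC) with SG by lia.
    nia.
Qed.

Lemma level_shift p s : subtree p -> is_stem p s ->
  forall k j u, prefix u s -> length u + j = length s -> count_ext p u (j + k) = count_ext p s k.
Proof.
  intros Hs Hst k j. induction j; intros u Hus Hl.
  - rewrite (prefix_antisym u s Hus) by lia. reflexivity.
  - simpl (S j + k). rewrite count_ext_S.
    set (x := nth (length u) s 0).
    assert (HsT : inT s) by (apply Hs; apply Hst).
    assert (Hx : x < M (length u)) by (apply HsT; lia).
    rewrite (sumf_single _ _ x Hx).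
    + apply IHj. apply prefix_ext; auto. lia. rewrite length_app; simpl; lia.
    + intros l Hlx. apply count_zero; auto. destruct (p (u ++ [l])) eqn:E; auto. exfalso.
      destruct (stem_comparable p s _ Hs Hst E) as [P|P].
      * pose proof (prefix_len _ _ P). rewrite length_app in H; simpl in H.
        assert (s = u ++ [l]) by (apply prefix_antisym; auto; rewrite length_app; simpl; lia).
        apply Hlx. unfold x. rewrite H0, nth_middle. auto.
      * apply Hlx. unfold x. rewrite (prefix_nth _ _ P (length u)). rewrite nth_middle; auto.
        rewrite length_app; simpl; lia.
Qed.

Lemma partD (p : tree) (l : R) (s : list nat) (h : nat) :
  Etilde p -> is_loss p l -> is_stem p s -> length s < h ->
  (INR (level_card p h) / INR (cone_card s h) >= 1 - l / 2)%R.
Proof.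
  intros HE [m [[Hm2 [s' [Hs' [Hm3 _]]]] [_ ->]]] Hst Hh.
  assert (Hsub : subtree p) by apply HE.
  rewrite (stem_unique p s' s Hsub Hs' Hst) in Hm3.
  unfold level_card, cone_card.
  replace h with (length s + (h - length s)) at 1 by lia.
  rewrite (level_shift p s Hsub Hst (h - length s) (length s) [] (prefix_nil s)) by reflexivity.
  rewrite count_full.
  destruct (deficiency p s HE Hst (h - length s) s (proj1 (proj1 Hst)) (prefix_refl s)) as [A B].
  set (F := Fk (length s) (h - length s)) in *.
  set (c := count_ext p s (h - length s)) in *.
  pose proof (Fk_pos (length s) (h - length s)). fold F in H.
  assert (Hp : length s < 2 ^ length s) by (apply Nat.pow_gt_lin_r; lia).
  assert (2 ^ (length s + 1) = 2 * 2 ^ length s) by (rewrite Nat.pow_add_r; simpl; lia).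
  assert (N : 2 * m * F <= 2 * m * c + F) by nia.
  apply le_INR in N. rewrite !plus_INR, !mult_INR in N. simpl (INR 2) in N.
  assert (HF : (0 < INR F)%R) by (apply lt_0_INR; lia).
  assert (Hm : (2 <= INR m)%R) by (apply (le_INR 2); lia).
  assert (X : ((1 - 1 / INR m / 2) * INR F <= INR c)%R).
  { replace ((1 - 1 / INR m / 2) * INR F)%R with ((2 * INR m * INR F - INR F) / (2 * INR m))%R by (field; lra).
    apply Rmult_le_reg_r with (2 * INR m)%R. lra.
    replace ((2 * INR m * INR F - INR F) / (2 * INR m) * (2 * INR m))%R with (2 * INR m * INR F - INR F)%R by (field; lra).
    lra. }
  apply Rle_ge. apply Rmult_le_reg_r with (INR F). lra.
  replace (INR c / INR F * INR F)%R with (INR c) by (field; lra). exact X.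
Qed.

Theorem lemma1 :
  (* (a) *)
  (forall (h : nat) (p : nat -> tree) (s : list nat),
     length s = h ->
     (forall i, i < pi h -> Etilde (p i)) ->
     (forall i, i < pi h -> p i s = true /\ exists st, is_stem (p i) st /\ prefix st s) ->
     exists q, Etilde q /\ forall i, i < pi h -> leE q (p i))
  /\
  (* (b) *)
  (fg_linked rho pi /\ ccc)
  /\
  (* (c) : the generic branch is eventually different from every ground-model real,
     stated as the density of the corresponding conditions *)
  (forall (x : nat -> nat) (p : tree), Etilde p ->
     exists q, Etilde q /\ leE q p /\
       exists n, forall t, q t = true ->
         forall m, n <= m -> m < length t -> nth m t 0 <> x m)
  /\
  (* (d) *)
  (forall (p : tree) (l : R) (s : list nat) (h : nat),
     Etilde p -> is_loss p l -> is_stem p s -> length s < h ->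
     (INR (level_card p h) / INR (cone_card s h) >= 1 - l / 2)%R).
Proof.
  split; [exact partA|].
  split; [split; [exact partB1| exact (partB2 partB1)]|].
  split; [exact partC| exact partD].
Qed.
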